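(* For all real $\alpha,\beta,\alpha',\beta'$ with $\beta\neq0$ and $\beta'\neq0$, every integer $n\ge0$ and every real $x$, \[ P_n^{(\alpha,\beta)}(x)=\sum_{j=0}^{n}(-1)^jS_{\alpha-\frac{\alpha'}{\beta'}\beta,\ \frac{\beta}{\beta'}}(n,j)\,P_j^{(\alpha',\beta')}(x). \] In particular, taking $(\alpha',\beta')=(-\alpha,-\beta)$, \[ P_n^{(\alpha,\beta)}(x)=\sum_{j=0}^{n}(-1)^jL(n,j)\,P_j^{(-\alpha,-\beta)}(x), \] where $L(n,j)$ are the (unsigned) Lah numbers: $L(0,0)=1$, $L(n,0)=0$ for $n\ge1$, and $L(n,j)=\binom{n-1}{j-1}\frac{n!}{j!}$ for $1\le j\le n$.
   Context: For real $a$ and integer $n\ge 1$, $\langle a\rangle_n:=a(a+1)\cdots(a+n-1)$ and $\langle a\rangle_0:=1$. For real $\alpha,\beta$ and integers $0\le k\le n$, $S_{\alpha,\beta}(n,k):=\frac{1}{k!}\sum_{j=0}^{k}(-1)^{k-j}\binom{k}{j}\langle-\alpha-\beta j\rangle_n$. For real $\alpha,\beta$ with $\beta\neq0$, the polynomials $P_n^{(\alpha,\beta)}(x)$ are defined by $\sum_{n\ge0}P_n^{(\alpha,\beta)}(x)\frac{t^n}{n!}=(1-t)^{\alpha}\exp\big(x((1-t)^{\beta}-1)\big)$ (formal power series in $t$). *)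

(* Defs.v *)
(* the statement is purely algebraic (formal power series
   identity), stated over an arbitrary real field R. *)
From HB Require Import structures.
From mathcomp Require Import all_boot all_order all_algebra.
Set Implicit Arguments. Unset Strict Implicit. Unset Printing Implicit Defensive.
Import Order.TTheory GRing.Theory Num.Theory.
Local Open Scope ring_scope.

Definition rising {R : ringType} (a : R) (n : nat) : R :=
  \prod_(i < n) (a + i%:R).

Definition Sab {R : fieldType} (al be : R) (n k : nat) : R :=
  (k`!%:R)^-1 * \sum_(j < k.+1)
     (-1) ^+ (k - j) * 'C(k, j)%:R * rising (- al - be * j%:R) n.

(* Formal power series in t over R, as coefficient sequences. *)
Definition fps (R : Type) := nat -> R.

Definition fps_mul {R : ringType} (f g : fps R) : fps R :=
  fun n => \sum_(i < n.+1) f i * g (n - i)%N.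

Definition fps_one {R : ringType} : fps R := fun n => if n == 0%N then 1 else 0.

Definition fps_pow {R : ringType} (f : fps R) (m : nat) : fps R :=
  iter m (fps_mul f) fps_one.

(* (1 - t)^a = sum_k binom(a,k) (-t)^k = sum_k <-a>_k t^k / k! *)
Definition fps_binom {R : fieldType} (a : R) : fps R :=
  fun k => rising (- a) k / k`!%:R.

(* (1 - t)^b - 1 : zero constant term *)
Definition fps_binom_m1 {R : fieldType} (b : R) : fps R :=
  fun k => fps_binom b k - fps_one k.

(* exp(x * u) for a series u with u 0 = 0 (formal composition) *)
Definition fps_expx {R : fieldType} (x : R) (u : fps R) : fps R :=
  fun n => \sum_(m < n.+1) x ^+ m / m`!%:R * fps_pow u m n.

(* P_n^{(alpha,beta)}(x) = n! [t^n] (1-t)^alpha exp(x((1-t)^beta - 1)) *)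
Definition Ppoly {R : fieldType} (al be : R) (n : nat) (x : R) : R :=
  n`!%:R * fps_mul (fps_binom al) (fps_expx x (fps_binom_m1 be)) n.

Definition lah {R : fieldType} (n j : nat) : R :=
  if n == 0%N then (if j == 0%N then 1 else 0)
  else if j == 0%N then 0
  else 'C(n.-1, j.-1)%:R * n`!%:R / j`!%:R.

(* Main.v *)
Require Import Defs.
From HB Require Import structures.
From mathcomp Require Import all_boot all_order all_algebra ring zify.
Import Order.TTheory GRing.Theory Num.Theory.
Local Open Scope ring_scope.

Lemma risingS (R : ringType) (a : R) n : rising a n.+1 = rising a n * (a + n%:R).
Proof. by rewrite /rising big_ord_recr. Qed.

Lemma rising0 (R : ringType) (a : R) : rising a 0 = 1.
Proof. by rewrite /rising big_ord0. Qed.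

Lemma sum_extend (R : ringType) (F : nat -> R) q N :
  (forall m, (q <= m)%N -> F m = 0) -> (q <= N)%N ->
  \sum_(m < q) F m = \sum_(m < N) F m.
Proof.
move=> H qN; rewrite (big_ord_widen N F qN) big_mkcond; apply: eq_bigr => i _.
by case: ifP => // /negbT; rewrite -leqNgt => /H ->.
Qed.

Lemma fact_neq0 (R : realFieldType) n : (n`!%:R : R) != 0.
Proof. by rewrite pnatr_eq0 -lt0n fact_gt0. Qed.

Lemma Sab_S0 (R : realFieldType) (a b : R) n :
  Sab a b n.+1 0 = (n%:R - a) * Sab a b n 0.
Proof.
rewrite /Sab !big_ord1 /= risingS. ring.
Qed.

Lemma Sab_SS (R : realFieldType) (a b : R) n k :
  Sab a b n.+1 k.+1 = (n%:R - a - b * (k.+1)%:R) * Sab a b n k.+1 - b * Sab a b n k.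
Proof.
rewrite /Sab.
have E : forall i : 'I_k.+2, (-1) ^+ (k.+1 - i) * 'C(k.+1, i)%:R * rising (- a - b * i%:R) n.+1
   = (n%:R - a - b * (k.+1)%:R) * ((-1) ^+ (k.+1 - i) * 'C(k.+1, i)%:R * rising (- a - b * i%:R) n)
     - b * (k.+1)%:R * ((-1) ^+ (k - i) * 'C(k, i)%:R * rising (- a - b * i%:R) n).
  move=> i; rewrite risingS.
  have Hi : (i <= k.+1)%N by rewrite -ltnS ltn_ord.
  have C : ((k.+1)%:R - (i : nat)%:R) * ('C(k.+1, i)%:R : R) = (k.+1)%:R * 'C(k, i)%:R.
    by rewrite -natrB // -!natrM -mul_bin_down.
  case: (ltnP i k.+1) => Hik.
    have kn0 : ((k.+1)%:R : R) != 0 by rewrite pnatr_eq0.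
    have C' : ('C(k, i)%:R : R) = ((k.+1)%:R - (i : nat)%:R) * 'C(k.+1, i)%:R / (k.+1)%:R.
      by rewrite C mulrC mulKf.
    rewrite subSn // exprS C'. by field; rewrite nat1r.
  have -> : (i : nat) = k.+1 by apply/eqP; rewrite eqn_leq Hi Hik.
  rewrite (@bin_small k k.+1) //. ring.
rewrite (eq_bigr _ (fun i _ => E i)) sumrB -!mulr_sumr.
rewrite [X in _ - _ * X]big_ord_recr /= bin_small // mulr0 mul0r addr0.
rewrite factS natrM invfM.
have := fact_neq0 R k; have : ((k.+1)%:R : R) != 0 by rewrite pnatr_eq0.
move=> h1 h2. by field; rewrite nat1r h1 h2.
Qed.

Lemma Sab_vanish (R : realFieldType) (a b : R) n k : (n < k)%N -> Sab a b n k = 0.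
Proof.
elim: n k => [|n IH] [|k] //.
  move=> _; rewrite /Sab.
  have -> : \sum_(j < k.+2) (-1) ^+ (k.+1 - j) * 'C(k.+1, j)%:R * rising (- a - b * j%:R) 0
      = ((-1) + 1) ^+ k.+1 :> R.
    rewrite exprDn; apply: eq_bigr => i _.
    by rewrite rising0 expr1n mulr1 mulr1 mulr_natr.
  by rewrite addNr expr0n mulr0.
rewrite ltnS => h; rewrite Sab_SS IH ?IH ?mulr0 ?subr0 //; exact: ltnW.
Qed.

Lemma Sab00 (R : realFieldType) (a b : R) : Sab a b 0 0 = 1.
Proof. by rewrite /Sab big_ord1 rising0 /= invr1 !mul1r. Qed.

Lemma key (R : realFieldType) (a b c : R) n N : (n < N)%N ->
  \sum_(j < N) (-1) ^+ j * Sab a b n j * rising (- c) j = rising (- a - b * c) n.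
Proof.
elim: n N => [|n IH] N hN.
  case: N hN => // N _.
  rewrite big_ord_recl /= Sab00 !rising0 expr0 !mulr1 big1 ?addr0 //.
  by move=> i _; rewrite Sab_vanish // mulr0 mul0r.
case: N hN => // N hN.
rewrite risingS -(IH N.+1) ?(ltnW hN) // mulr_suml.
set A := fun j : nat => (-1) ^+ j * Sab a b n j * rising (- c) j.
have L1 : \sum_(j < N.+1) (-1) ^+ j * Sab a b n.+1 j * rising (- c) j =
   (n%:R - a) * Sab a b n 0 +
   \sum_(j < N) (-1) ^+ j.+1 * (n%:R - a - b * (j.+1)%:R) * Sab a b n j.+1 * rising (- c) j.+1 +
   \sum_(j < N) b * (A j * (- c + j%:R)).
  rewrite big_ord_recl /= Sab_S0 expr0 rising0 !mul1r mulr1 -addrA; congr (_ + _).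
  rewrite -big_split /=; apply: eq_bigr => i _.
  rewrite Sab_SS /A risingS exprS /=. ring.
have R1 : \sum_(j < N.+1) (-1) ^+ j * Sab a b n j * rising (- c) j * (- a - b * c + n%:R)
   = \sum_(j < N.+1) (n%:R - a - b * j%:R) * A j + \sum_(j < N.+1) b * (A j * (- c + j%:R)).
  rewrite -big_split /=; apply: eq_bigr => i _; rewrite /A. ring.
have R2 : \sum_(j < N.+1) (n%:R - a - b * j%:R) * A j = (n%:R - a) * Sab a b n 0 +
   \sum_(j < N) (-1) ^+ j.+1 * (n%:R - a - b * (j.+1)%:R) * Sab a b n j.+1 * rising (- c) j.+1.
  rewrite big_ord_recl /= /A expr0 rising0; congr (_ + _); first by ring.
  apply: eq_bigr => i _ /=. rewrite /A /bump /=. ring.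
have R3 : \sum_(j < N.+1) b * (A j * (- c + j%:R)) = \sum_(j < N) b * (A j * (- c + j%:R)).
  by rewrite big_ord_recr /= /A Sab_vanish // mulr0 !mul0r mulr0 addr0.
by rewrite L1 R1 R2 R3.
Qed.

Lemma rising_vdm (R : comRingType) (c d : R) n :
  rising (c + d) n = \sum_(i < n.+1) 'C(n, i)%:R * rising c i * rising d (n - i).
Proof.
elim: n => [|n IH]; first by rewrite big_ord1 !rising0 /= !mulr1.
rewrite risingS IH mulr_suml.
have T : forall i : 'I_n.+1, 'C(n, i)%:R * rising c i * rising d (n - i) * (c + d + n%:R)
   = 'C(n, i)%:R * rising c i.+1 * rising d (n - i) + 'C(n, i)%:R * rising c i * rising d (n - i).+1.
  move=> i; have hi : (i <= n)%N by rewrite -ltnS ltn_ord.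
  rewrite !risingS natrB //. ring.
rewrite (eq_bigr _ (fun i _ => T i)) big_split /=.
rewrite [in RHS]big_ord_recl /=.
under [in RHS]eq_bigr => i _ do rewrite /bump /= add1n binS natrD !mulrDl subSS.
rewrite big_split /= addrA [in LHS]addrC; congr (_ + _).
rewrite big_ord_recl /= !bin0 !subn0 rising0 !mul1r; congr (_ + _).
rewrite [in RHS]big_ord_recr /= bin_small // !mul0r addr0.
by apply: eq_bigr => i _; rewrite /bump /= add1n subnSK.
Qed.

Lemma binom_mul (R : realFieldType) (c d : R) n :
  fps_mul (fps_binom c) (fps_binom d) n = fps_binom (c + d) n.
Proof.
rewrite /fps_mul /fps_binom opprD rising_vdm mulr_suml; apply: eq_bigr => i _.
have hi : (i <= n)%N by rewrite -ltnS ltn_ord.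
rewrite -(bin_fact hi) !natrM.
have h1 := fact_neq0 R i; have h2 := fact_neq0 R (n - i).
have h3 : ('C(n, i)%:R : R) != 0 by rewrite pnatr_eq0 -lt0n bin_gt0.
field. by rewrite h1 h2 h3.
Qed.

Lemma fps_mul_ext (R : ringType) (f g g' : fps R) n :
  (forall k, g k = g' k) -> fps_mul f g n = fps_mul f g' n.
Proof. by move=> H; apply: eq_bigr => i _; rewrite H. Qed.

Lemma fps_one_mul (R : ringType) (h : fps R) n : fps_mul fps_one h n = h n.
Proof.
rewrite /fps_mul big_ord_recl /= mul1r subn0 big1 ?addr0 //.
by move=> i _; rewrite mul0r.
Qed.

Lemma binom0 (R : realFieldType) p : fps_binom (0 : R) p = fps_one p.
Proof.
rewrite /fps_binom /fps_one oppr0; case: p => [|p] /=.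
  by rewrite rising0 invr1 mulr1.
by rewrite /rising big_ord_recl /= add0r !mul0r.
Qed.

Lemma Lsh (R : comRingType) (F : nat -> R) m :
  \sum_(j < m.+1) (-1) ^+ (m - j) * 'C(m, j)%:R * (F j.+1 - F j) =
  \sum_(j < m.+2) (-1) ^+ (m.+1 - j) * 'C(m.+1, j)%:R * F j.
Proof.
rewrite [in RHS]big_ord_recl /= subn0 bin0.
under [in RHS]eq_bigr => j _ do rewrite /bump /= add1n subSS binS natrD mulrDr mulrDl.
rewrite big_split /=.
under eq_bigr => j _ do rewrite mulrBr.
rewrite sumrB [in RHS]addrA [in RHS]addrC; congr (_ + _).
rewrite big_ord_recl /= subn0 bin0 [in RHS]big_ord_recr /= bin_small // mulr0 mul0r addr0.
rewrite opprD exprS mulN1r.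
have -> : \sum_(j < m) (-1) ^+ (m - j) * 'C(m, j.+1)%:R * F j.+1
  = - \sum_(j < m) (-1) ^+ (m - bump 0 j) * 'C(m, bump 0 j)%:R * F (bump 0 j).
  rewrite -sumrN; apply: eq_bigr => j _; rewrite /bump /= add1n.
  rewrite -(subnSK (ltn_ord j)) exprS. ring.
by rewrite !mulr1 mulNr.
Qed.

Lemma pow_u (R : realFieldType) (be : R) m p :
  fps_pow (fps_binom_m1 be) m p =
  \sum_(j < m.+1) (-1) ^+ (m - j) * 'C(m, j)%:R * fps_binom (be * j%:R) p.
Proof.
elim: m p => [|m IH] p.
  by rewrite big_ord1 /= mulr0 binom0 !mul1r.
have -> : fps_pow (fps_binom_m1 be) m.+1 p
    = fps_mul (fps_binom_m1 be) (fps_pow (fps_binom_m1 be) m) p by [].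
rewrite (@fps_mul_ext _ _ _ _ _ IH) -(@Lsh _ (fun j => fps_binom (be * j%:R) p) m).
rewrite /fps_mul.
under eq_bigr => i _ do rewrite mulr_sumr.
rewrite exchange_big /=; apply: eq_bigr => j _.
have -> : \sum_(i < p.+1) fps_binom_m1 be i *
      ((-1) ^+ (m - j) * 'C(m, j)%:R * fps_binom (be * j%:R) (p - i)%N)
   = (-1) ^+ (m - j) * 'C(m, j)%:R *
     (fps_mul (fps_binom be) (fps_binom (be * j%:R)) p - fps_mul fps_one (fps_binom (be * j%:R)) p).
  rewrite /fps_mul -sumrB mulr_sumr; apply: eq_bigr => i _.
  rewrite /fps_binom_m1. ring.
have -> : be * (j.+1)%:R = be + be * (j : nat)%:R by rewrite -natr1 mulrDr mulr1 addrC.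
by rewrite binom_mul fps_one_mul.
Qed.

Lemma u_vanish (R : realFieldType) (be : R) m p : (p < m)%N ->
  fps_pow (fps_binom_m1 be) m p = 0.
Proof.
move=> h; have := @Sab_vanish R 0 be p m h; rewrite /Sab pow_u => /eqP.
rewrite mulf_eq0 invr_eq0 (negbTE (fact_neq0 R m)) /= => /eqP H.
rewrite /fps_binom.
have -> : \sum_(j < m.+1) (-1) ^+ (m - j) * 'C(m, j)%:R * (rising (- (be * j%:R)) p / p`!%:R)
   = (\sum_(j < m.+1) (-1) ^+ (m - j) * 'C(m, j)%:R * rising (- 0 - be * j%:R) p) / p`!%:R.
  rewrite mulr_suml; apply: eq_bigr => j _; rewrite oppr0 sub0r. ring.
by rewrite H mul0r.
Qed.

Lemma mulU (R : realFieldType) (al be : R) m n :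
  fps_mul (fps_binom al) (fps_pow (fps_binom_m1 be) m) n = m`!%:R * Sab al be n m / n`!%:R.
Proof.
rewrite (@fps_mul_ext _ _ _ _ _ (@pow_u R be m)) /fps_mul.
under eq_bigr => i _ do rewrite mulr_sumr.
rewrite exchange_big /=.
have -> : \sum_(j < m.+1) \sum_(i < n.+1) fps_binom al i *
      ((-1) ^+ (m - j) * 'C(m, j)%:R * fps_binom (be * j%:R) (n - i)%N)
   = \sum_(j < m.+1) (-1) ^+ (m - j) * 'C(m, j)%:R * fps_mul (fps_binom al) (fps_binom (be * j%:R)) n.
  apply: eq_bigr => j _; rewrite /fps_mul mulr_sumr; apply: eq_bigr => i _. ring.
under eq_bigr => j _ do rewrite binom_mul /fps_binom opprD.
rewrite /Sab mulrA divff ?fact_neq0 // mul1r mulr_suml.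
apply: eq_bigr => j _. ring.
Qed.

Lemma formulaE (R : realFieldType) (al be : R) n x :
  Ppoly al be n x = \sum_(m < n.+1) x ^+ m * Sab al be n m.
Proof.
rewrite /Ppoly /fps_mul.
have E1 : forall i : 'I_n.+1, fps_binom al i * fps_expx x (fps_binom_m1 be) (n - i)%N
   = \sum_(m < n.+1) x ^+ m / m`!%:R * (fps_binom al i * fps_pow (fps_binom_m1 be) m (n - i)%N).
  move=> i; rewrite /fps_expx.
  rewrite (@sum_extend _ (fun m => x ^+ m / m`!%:R * fps_pow (fps_binom_m1 be) m (n - i)%N) (n - i).+1 n.+1); last first.
  - by rewrite ltnS leq_subr.
  - by move=> m hm; rewrite u_vanish ?mulr0.
  rewrite mulr_sumr; apply: eq_bigr => m _. ring.
rewrite (eq_bigr _ (fun i _ => E1 i)) exchange_big mulr_sumr; apply: eq_bigr => m _ /=.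
rewrite -mulr_sumr.
have -> : \sum_(i < n.+1) fps_binom al i * fps_pow (fps_binom_m1 be) m (n - i)%N
  = fps_mul (fps_binom al) (fps_pow (fps_binom_m1 be) m) n by [].
rewrite mulU.
have h1 := fact_neq0 R m; have h2 := fact_neq0 R n.
by field; rewrite h1 h2.
Qed.

Lemma conv (R : realFieldType) (al be al' be' : R) (hbe' : be' != 0) n x :
  Ppoly al be n x = \sum_(j < n.+1) (-1) ^+ j * Sab (al - al' / be' * be) (be / be') n j
                      * Ppoly al' be' j x.
Proof.
set a := al - al' / be' * be; set b := be / be'.
have E1 : forall j : 'I_n.+1, (-1) ^+ j * Sab a b n j * Ppoly al' be' j x
   = \sum_(k < n.+1) x ^+ k * ((-1) ^+ j * Sab a b n j * Sab al' be' j k).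
  move=> j; rewrite formulaE.
  rewrite (@sum_extend _ (fun k => x ^+ k * Sab al' be' j k) j.+1 n.+1); last first.
  - exact: ltn_ord.
  - by move=> k hk; rewrite Sab_vanish ?mulr0.
  rewrite mulr_sumr; apply: eq_bigr => k _. ring.
rewrite formulaE (eq_bigr _ (fun j _ => E1 j)) exchange_big /=; apply: eq_bigr => k _.
rewrite -mulr_sumr; congr (_ * _).
have E2 : forall j : 'I_n.+1, (-1) ^+ j * Sab a b n j * Sab al' be' j k
   = k`!%:R^-1 * \sum_(i < k.+1) (-1) ^+ (k - i) * 'C(k, i)%:R *
        ((-1) ^+ j * Sab a b n j * rising (- (al' + be' * i%:R)) j).
  move=> j; rewrite [Sab al' be' j k]/Sab mulr_sumr mulr_sumr mulr_sumr; apply: eq_bigr => i _.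
  rewrite opprD. ring.
rewrite (eq_bigr _ (fun j _ => E2 j)) -mulr_sumr exchange_big /= /Sab; congr (_ * _).
apply: eq_bigr => i _; rewrite -mulr_sumr key //; congr (_ * rising _ _).
rewrite /a /b. by field.
Qed.

Lemma lahN n j : ('C(n.+1, j.+1) * n.+2 = (n + j + 3) * 'C(n, j.+1) + j.+2 * 'C(n, j))%N.
Proof.
case: (leqP j n) => h.
  have := mul_bin_left n j; rewrite binS. nia.
have h1 : (n < j.+1)%N by apply: ltnW.
by rewrite (bin_small h) (bin_small h1) bin_small ?muln0 ?ltnS.
Qed.

Lemma lahSS (R : realFieldType) n j :
  lah n.+1 j.+1 = 'C(n, j)%:R * (n.+1)`!%:R / (j.+1)`!%:R :> R.
Proof. by []. Qed.

Lemma lah_rec (R : realFieldType) n j :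
  lah n.+1 j.+1 = (n%:R + (j.+1)%:R) * lah n j.+1 + lah n j :> R.
Proof.
case: n => [|n].
  case: j => [|j]; first by rewrite lahSS /lah /= bin0 mulr0 add0r mul1r divff // fact_neq0.
  by rewrite lahSS /lah /= bin_small // !mul0r mulr0 addr0.
case: j => [|j].
  rewrite !lahSS /lah /= addr0 !bin0 !factS !natrM !mul1r !divr1.
  by rewrite -[(n.+2)%:R]natr1 fact0.
rewrite !lahSS.
have H := lahN n j.
have E : ('C(n.+1, j.+1)%:R : R) = ((n + j + 3)%:R * 'C(n, j.+1)%:R + (j.+2)%:R * 'C(n, j)%:R) / (n.+2)%:R.
  by rewrite -!natrM -natrD -H natrM mulfK // pnatr_eq0.
have h1 := fact_neq0 R n.+1; have h2 := fact_neq0 R j.+1.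
rewrite E (factS n.+1) (factS j.+1).
move: h1 h2; set F := (n.+1)`!; set G := (j.+1)`!; clearbody F G; move=> h1 h2.
rewrite !natrM.
have h3 : ((n.+2)%:R : R) != 0 by rewrite pnatr_eq0.
have h4 : ((j.+2)%:R : R) != 0 by rewrite pnatr_eq0.
rewrite !natrD. field. by rewrite h2 -!natrD !add2n h3 h4.
Qed.

Lemma Sab_lah (R : realFieldType) n j : Sab (0 : R) (-1) n j = lah n j.
Proof.
elim: n j => [|n IH] [|j].
- by rewrite Sab00.
- by rewrite Sab_vanish.
- rewrite Sab_S0 IH subr0; case: n {IH} => [|n]; first by rewrite mul0r.
  by rewrite /lah /= mulr0.
- rewrite Sab_SS lah_rec !IH subr0. ring.
Qed.

Theorem proposition5 (R : realFieldType) (al be : R) (hbe : be != 0) :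
  (forall (al' be' : R), be' != 0 -> forall (n : nat) (x : R),
     Ppoly al be n x =
     \sum_(j < n.+1) (-1) ^+ j * Sab (al - al' / be' * be) (be / be') n j
                      * Ppoly al' be' j x)
  /\
  (forall (n : nat) (x : R),
     Ppoly al be n x =
     \sum_(j < n.+1) (-1) ^+ j * lah n j * Ppoly (- al) (- be) j x).
Proof.
split; first by move=> al' be' h n x; exact: conv.
move=> n x; rewrite (@conv R al be (- al) (- be)) ?oppr_eq0 //.
apply: eq_bigr => j _; rewrite -Sab_lah.
have -> : al - - al / - be * be = 0 by field.
have -> : be / - be = -1 by field.
by [].
Qed.
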